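(* Let $n$ be a positive integer, let $p\ge q$ be positive integers, and let $B$ be a $p\times q$ matrix with nonnegative real entries. For each positive divisor $k$ of $n$, let $F_k$ be the symmetric block matrix of size $kq+\frac{n}{k}p$ whose block rows and columns have sizes, in order, $p$, then $q$ repeated $k$ times, then $p$ repeated $\frac{n}{k}-1$ times; the block in a size-$p$ block row and a size-$q$ block column is $B$, the block in a size-$q$ block row and a size-$p$ block column is $B^T$, and all other blocks are zero. Then the normalized Laplacians $L\big(F_k\oplus 0_{(n-\frac{n}{k})p+(1-k)q}\big)$, as $k$ ranges over all positive divisors of $n$, are pairwise cospectral.
   Context: For matrices $X,Y$, $X\oplus Y=\begin{bmatrix} X&0\\0&Y\end{bmatrix}$; $0_m$ is the $m\times m$ zero matrix. For a nonnegative real symmetric matrix $M$ with positive row sums, its normalized Laplacian is $L(M)=I-\Delta^{-1/2}M\Delta^{-1/2}$, where $\Delta$ is the diagonal matrix of row sums of $M$. If $M$ has zero row sums, write (after a simultaneous permutation of rows and columns) $M=M_1\oplus 0_k$ where $M_1$ has positive row sums; then $L(M)=L(M_1)\oplus I_k$. Two square matrices are cospectral if they have the same eigenvalues with the same multiplicities. *)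

(* Defs.v *)
From HB Require Import structures.
From mathcomp Require Import all_boot all_order all_algebra.
Set Implicit Arguments.
Unset Strict Implicit.
Unset Printing Implicit Defensive.
Import Order.TTheory GRing.Theory Num.Theory.
Local Open Scope ring_scope.

Definition dsum (R : pzRingType) m n (X : 'M[R]_m) (Y : 'M[R]_n) : 'M[R]_(m + n) :=
  block_mx X 0 0 Y.

Definition rowsums (R : rcfType) N (M : 'M[R]_N) : 'I_N -> R :=
  fun i => \sum_(j < N) M i j.

(* Normalized Laplacian L(M) = I - D^{-1/2} M D^{-1/2}, where D^{-1/2} is the
   diagonal matrix with entries (d_i)^{-1/2}, with the convention that the
   entry is 0 when d_i = 0 (MathComp's 0^-1 = 0).  For a nonnegative M, a zero
   row sum means a zero row (and column, by symmetry), so this gives exactly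
   L(M_1) (+) I_k after the simultaneous permutation described in the paper. *)
Definition normLap (R : rcfType) N (M : 'M[R]_N) : 'M[R]_N :=
  let Dih := diag_mx (\row_i (Num.sqrt (rowsums M i))^-1) in
  1%:M - Dih *m M *m Dih.

(* Cospectral: same eigenvalues with the same (algebraic) multiplicities,
   i.e. equal characteristic polynomials (this also forces equal sizes). *)
Definition cospectral (R : rcfType) m n (A : 'M[R]_m) (C : 'M[R]_n) : Prop :=
  char_poly A = char_poly C.

Definition Fk (R : rcfType) (n p q k : nat) (B : 'M[R]_(p, q)) :
  'M[R]_(p + ((\sum_(j < k) q)%N + (\sum_(i < (n %/ k).-1) p)%N)) :=
  let Rrow : 'M[R]_(p, \sum_(j < k) q) := \mxrow_(j < k) B in
  let Mqp : 'M[R]_(\sum_(j < k) q, \sum_(i < (n %/ k).-1) p) :=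
    \mxblock_(j < k, i < (n %/ k).-1) B^T in
  block_mx (0 : 'M[R]_(p, p)) (row_mx Rrow 0)
           (col_mx Rrow^T 0) (block_mx 0 Mqp Mqp^T 0).

Definition Fk_padded (R : rcfType) (n p q k : nat) (B : 'M[R]_(p, q)) :=
  dsum (Fk n k B) (0 : 'M[R]_((n - n %/ k) * p + q - k * q)).

(* Main.v *)
Require Import Defs.
From HB Require Import structures.
From mathcomp Require Import all_boot all_order all_algebra.
Set Implicit Arguments. Unset Strict Implicit. Unset Printing Implicit Defensive.
Import Order.TTheory GRing.Theory Num.Theory.
Local Open Scope ring_scope.
From mathcomp.algebra_tactics Require Import ring.
From mathcomp Require Import zify.

Lemma scal0 (R : fieldType) (x y u v M : R) : x != 0 -> y != 0 ->
  x * (y^-1 * u) * M * (x^-1 * v) * (y ^+ 2) * y^-1 = u * M * v.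
Proof. move=> hx hy. transitivity (x * x^-1 * (y * y^-1) * (y * y^-1) * (u*M*v)); first by ring. by rewrite !mulfV // !mul1r. Qed.
Lemma scal (R : rcfType) (a b c1 c2 M : R) : 0 < a -> 0 < b ->
  Num.sqrt a * (Num.sqrt (b*c1))^-1 * M * (Num.sqrt (a*c2))^-1 * b * (Num.sqrt b)^-1
  = (Num.sqrt c1)^-1 * M * (Num.sqrt c2)^-1.
Proof.
move=> ha hb; have ha' := ltW ha; have hb' := ltW hb.
rewrite !sqrtrM // !invfM -[X in _ * X / Num.sqrt b](sqr_sqrtr hb').
have sa : Num.sqrt a != 0 by rewrite sqrtr_eq0 -ltNge.
have sb : Num.sqrt b != 0 by rewrite sqrtr_eq0 -ltNge.
exact: scal0.
Qed.


Lemma WA (PR : comNzRingType) N r (U : 'M[PR]_(N,r)) (G : 'M[PR]_(r,N)) (x : PR) :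
  x ^+ r * \det (x%:M + U *m G) = x ^+ N * \det (x%:M + G *m U).
Proof.
set S := block_mx (x%:M : 'M_N) (- U) G (1%:M : 'M_r).
have h1 : block_mx 1%:M U 0 1%:M *m S = block_mx (x%:M + U *m G) 0 G 1%:M.
  rewrite mulmx_block !mul1mx !mul0mx !mulmx1 add0r.
  by rewrite addNr add0r.
have h2 : block_mx 1%:M 0 (- G) x%:M *m S = block_mx x%:M (- U) 0 (x%:M + G *m U).
  rewrite mulmx_block !mul1mx !mul0mx !addr0 mul_scalar_mx mulNmx mul_mx_scalar.
  by rewrite addNr mulmx1 mulNmx mulmxN opprK addrC.
have e1 := congr1 determinant h1; have e2 := congr1 determinant h2.
rewrite det_mulmx det_ublock !det1 !mul1r det_lblock det1 mulr1 in e1.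
rewrite det_mulmx det_lblock det_ublock !det1 mul1r !det_scalar in e2.
by rewrite -e1 e2.
Qed.

Section Sel.
Variable R : comNzRingType.

Definition selector N r (E : 'M[R]_(N,r)) :=
  forall i, exists o : option 'I_r,
    forall c, E i c = if o is Some c' then (c' == c)%:R else 0.

Lemma sel_diag N r (E : 'M[R]_(N,r)) (w : 'cV[R]_r) (phi : R -> R) :
  selector E ->
  diag_mx (\row_i phi ((E *m w) i 0)) *m E = E *m diag_mx (\row_c phi (w c 0)).
Proof.
move=> sE; apply/matrixP => i c; rewrite mul_diag_mx mul_mx_diag !mxE.
have [o Ho] := sE i; rewrite Ho.
under eq_bigr do rewrite Ho.
case: o Ho => [c'|] Ho; last by rewrite mulr0 mul0r.
rewrite (bigD1 c') //= eqxx mul1r big1 ?addr0; last first.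
  by move=> j; rewrite eq_sym => /negbTE ->; rewrite mul0r.
by case: eqVneq => [->|_]; rewrite ?mulr1 ?mul1r ?mulr0 ?mul0r.
Qed.

Lemma sel_diag_tr N r (E : 'M[R]_(N,r)) (w : 'cV[R]_r) (phi : R -> R) :
  selector E ->
  E^T *m diag_mx (\row_i phi ((E *m w) i 0)) = diag_mx (\row_c phi (w c 0)) *m E^T.
Proof.
move=> sE; apply/matrixP => c i; rewrite mul_diag_mx mul_mx_diag !mxE.
have [o Ho] := sE i; rewrite Ho.
under eq_bigr do rewrite Ho.
case: o Ho => [c'|] Ho; last by rewrite mulr0 mul0r.
rewrite (bigD1 c') //= eqxx mul1r big1 ?addr0; last first.
  by move=> j; rewrite eq_sym => /negbTE ->; rewrite mul0r.
by case: eqVneq => [->|_]; rewrite ?mulr1 ?mul1r ?mulr0 ?mul0r.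
Qed.

Lemma sel0 N r : selector (0 : 'M[R]_(N,r)).
Proof. by move=> i; exists None => c; rewrite mxE. Qed.

Lemma sel1 N : selector (1%:M : 'M[R]_N).
Proof. by move=> i; exists (Some i) => c; rewrite mxE. Qed.

Lemma sel_col N1 N2 r (A : 'M[R]_(N1,r)) (B : 'M[R]_(N2,r)) :
  selector A -> selector B -> selector (col_mx A B).
Proof.
move=> sA sB i; case: (split_ordP i) => j ->.
  by have [o Ho] := sA j; exists o => c; rewrite col_mxEu Ho.
by have [o Ho] := sB j; exists o => c; rewrite col_mxEd Ho.
Qed.

Lemma sel_rowl N r1 r2 (A : 'M[R]_(N,r1)) :
  selector A -> selector (row_mx A (0 : 'M_(N, r2))).
Proof.
move=> sA i; have [o Ho] := sA i.
exists (if o is Some c' then Some (lshift r2 c') else None) => c.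
case: (split_ordP c) => j ->; rewrite ?row_mxEl ?row_mxEr ?Ho ?mxE.
  by case: o {Ho} => // c'; rewrite eq_shift.
by case: o {Ho} => // c'; rewrite ?mxE ?eq_shift.
Qed.

Lemma sel_rowr N r1 r2 (A : 'M[R]_(N,r2)) :
  selector A -> selector (row_mx (0 : 'M_(N, r1)) A).
Proof.
move=> sA i; have [o Ho] := sA i.
exists (if o is Some c' then Some (rshift r1 c') else None) => c.
case: (split_ordP c) => j ->; rewrite ?row_mxEl ?row_mxEr ?Ho ?mxE.
  by case: o {Ho} => // c'; rewrite ?mxE ?eq_shift.
by case: o {Ho} => // c'; rewrite eq_shift.
Qed.

Lemma sel_mxcol k q : selector (\mxcol_(j < k) (1%:M : 'M[R]_q)).
Proof.
by move=> s; exists (Some (tagnat.sig2 s)) => c; rewrite !mxE.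
Qed.

End Sel.

Section Main.
Variables (R : rcfType) (n p q k : nat) (B : 'M[R]_(p, q)).
Local Notation m := (n %/ k)%N.
Definition Eq := \mxcol_(j < k) (1%:M : 'M[R]_q).
Definition Ep := \mxcol_(i < m.-1) (1%:M : 'M[R]_p).
Definition EF : 'M[R]_(p + ((\sum_(j < k) q)%N + (\sum_(i < m.-1) p)%N), p + q) :=
  col_mx (row_mx 1%:M 0) (col_mx (row_mx 0 Eq) (row_mx Ep 0)).
Definition M0 : 'M[R]_(p + q) := block_mx 0 B B^T 0.

Lemma Fk_eq : Fk n k B = EF *m M0 *m EF^T.
Proof.
rewrite /Fk /EF /M0 !mul_col_mx !mul_row_block.
rewrite !tr_col_mx !tr_row_mx !mul_mx_row !mul_row_col !block_mxEv !mul0mx !mulmx0 !mul1mx !addr0 !add0r !trmx0 !trmx1 !mulmx1 !mul0mx !mulmx0 !addr0 !add0r.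
rewrite -block_mxEh block_mxEv. congr (col_mx _ (col_mx (row_mx _ (row_mx _ _)) (row_mx _ (row_mx _ _)))).
- by rewrite /Eq tr_mxcol mul_mxrow; congr (row_mx _ (row_mx _ _)); apply: eq_mxrow => j; rewrite trmx1 mulmx1.
- by rewrite /Eq tr_mxrow mxcol_mul; apply: eq_mxcol => j; rewrite mul1mx.
- by rewrite /Eq /Ep tr_mxcol mxcol_mul mul_mxcol_mxrow; apply: eq_mxblock => i j; rewrite mul1mx trmx1 mulmx1.
- by rewrite /Eq /Ep tr_mxblock tr_mxcol mxcol_mul mul_mxcol_mxrow; apply: eq_mxblock => i j; rewrite trmxK mul1mx trmx1 mulmx1.
Qed.

Definition padN := ((n - m) * p + q - k * q)%N.
Definition E : 'M[R]_(p + ((\sum_(j < k) q)%N + (\sum_(i < m.-1) p)%N) + padN, p + q) :=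
  col_mx EF 0.

Lemma Fkp_eq : Fk_padded n k B = E *m M0 *m E^T.
Proof.
rewrite /Fk_padded /dsum Fk_eq /E [col_mx EF 0 *m _]mul_col_mx tr_col_mx mul_col_row !trmx0 !mulmx0 !mul0mx.
by [].
Qed.

Lemma E_sel : selector E.
Proof.
apply: sel_col; last exact: sel0.
apply: sel_col; first exact/sel_rowl/sel1.
apply: sel_col; [exact/sel_rowr/sel_mxcol | exact/sel_rowl/sel_mxcol].
Qed.

Definition dv : 'rV[R]_(p + q) := row_mx (const_mx m%:R) (const_mx k%:R).
Definition dvo : 'rV[R]_(p + q) := row_mx (const_mx k%:R) (const_mx m%:R).

Lemma EtE (m0 : (0 < m)%N) : E^T *m E = diag_mx dv.
Proof.
rewrite /E tr_col_mx mul_row_col trmx0 mul0mx addr0 /EF.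
rewrite !tr_col_mx !tr_row_mx !mul_row_col !mul_col_row !trmx0 !trmx1.
rewrite !mul0mx !mulmx0 !mul1mx.
rewrite /dv diag_mx_row !diag_const_mx !add_block_mx !addr0 !add0r.
have -> : Eq^T *m Eq = k%:R%:M.
  rewrite /Eq tr_mxcol mul_mxrow_mxcol.
  under eq_bigr do rewrite trmx1 mulmx1.
  by rewrite sumr_const card_ord -scaler_nat scalemx1.
have -> : Ep^T *m Ep = (m.-1)%:R%:M.
  rewrite /Ep tr_mxcol mul_mxrow_mxcol.
  under eq_bigr do rewrite trmx1 mulmx1.
  by rewrite sumr_const card_ord -scaler_nat scalemx1.
by rewrite -[1%:M]/(1%:R%:M) -raddfD /= -natrD add1n prednK.
Qed.

Lemma E1 : E^T *m (const_mx 1 : 'M_(_, 1)) = E^T *m E *m (const_mx 1 : 'M_(p + q, 1)).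
Proof.
rewrite /E tr_col_mx -mulmxA mul_col_mx mul0mx trmx0.
rewrite -[const_mx 1 in LHS](@col_mx_const _ _ padN) mul_row_col mul0mx addr0.
rewrite mul_row_col mul0mx addr0; congr (_ *m _).
rewrite /EF !mul_col_mx -[const_mx 1 : 'M_(p + q, 1)]col_mx_const !mul_row_col !mul0mx ?addr0 ?add0r mul1mx.
by rewrite /Eq /Ep !mxcol_mul !mul1mx !mxcol_const !col_mx_const.
Qed.


Lemma M0_blk x y : M0 x y != 0 -> dv 0 y = dvo 0 x /\ dv 0 x = dvo 0 y.
Proof.
rewrite /M0 /dv /dvo.
case: (split_ordP x) => i ->; case: (split_ordP y) => j ->;
  rewrite ?block_mxEul ?block_mxEur ?block_mxEdl ?block_mxEdr ?row_mxEl ?row_mxEr ?mxE //;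
  by rewrite eqxx.
Qed.

Lemma dv_gt0 (k0 : (0 < k)%N) (m0 : (0 < m)%N) x : 0 < dv 0 x.
Proof.
by rewrite /dv; case: (split_ordP x) => i ->; rewrite ?row_mxEl ?row_mxEr mxE ltr0n.
Qed.

Definition wv : 'cV[R]_(p + q) := locked (M0 *m diag_mx dv *m const_mx 1).

Lemma wvE x : wv x 0 = dvo 0 x * (M0 *m (const_mx 1 : 'cV_(p + q))) x 0.
Proof.
rewrite /wv -lock; have := M0_blk; move: M0 dv dvo => A d d' hA.
rewrite mul_mx_diag !mxE mulr_sumr; apply: eq_bigr => z _; rewrite !mxE.
have [->|nz] := eqVneq (A x z) 0; first by rewrite !(mul0r, mulr0).
by have [-> _] := hA _ _ nz; rewrite !mulr1 mulrC.
Qed.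

Definition phi (x : R) := (Num.sqrt x)^-1.
Definition psi : 'rV[R]_(p + q) := \row_x phi ((M0 *m (const_mx 1 : 'cV_(p + q))) x 0).
Definition T0 : 'M[R]_(p + q) := diag_mx psi *m M0 *m diag_mx psi.


Lemma key (k0 : (0 < k)%N) (m0 : (0 < m)%N) :
  ('X - 1) ^+ (p + q) * char_poly (normLap (Fk_padded n k B)) =
  ('X - 1) ^+ (p + ((\sum_(j < k) q)%N + (\sum_(i < m.-1) p)%N) + padN)
    * \det (('X - 1)%:M + map_mx polyC T0).
Proof.
pose Phi := diag_mx (\row_c phi (wv c 0)).
pose sv : 'rV[R]_(p + q) := \row_c Num.sqrt (dv 0 c).
pose S := diag_mx sv.
pose S' := diag_mx (\row_c (sv 0 c)^-1).
have sv0 c : sv 0 c != 0.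
  by rewrite mxE sqrtr_eq0 -ltNge dv_gt0.
have hS : S' *m S = 1%:M.
  rewrite mulmx_diag -diag_const_mx; congr diag_mx; apply/rowP => c.
  by rewrite [in LHS]mxE [in LHS]mxE mulVf // mxE.
have hM : normLap (Fk_padded n k B) =
    1%:M - (E *m S') *m (S *m (Phi *m M0 *m Phi) *m E^T).
  rewrite /normLap; congr (_ - _).
  have rs : \row_i (Num.sqrt (rowsums (Fk_padded n k B) i))^-1
            = \row_i phi ((E *m wv) i 0).
    apply/rowP => i; rewrite mxE [RHS]mxE /phi; congr (_^-1); congr Num.sqrt.
    rewrite /rowsums.
    have -> : \sum_j Fk_padded n k B i j
              = (Fk_padded n k B *m (const_mx 1 : 'cV_(_))) i 0.
      by rewrite mxE; apply: eq_bigr => j _; rewrite [const_mx 1 j 0]mxE mulr1.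
    by rewrite Fkp_eq -!mulmxA E1 EtE // /wv -lock !mulmxA.
  rewrite rs.
  rewrite Fkp_eq.
  have hDE := sel_diag wv phi E_sel.
  have hED := sel_diag_tr wv phi E_sel.
  rewrite !mulmxA hDE -(mulmxA _ E^T) hED.
  by rewrite -(mulmxA E S' S) hS mulmx1 !mulmxA.
have hGU : (S *m (Phi *m M0 *m Phi) *m E^T) *m (E *m S') = T0.
  rewrite mulmxA -(mulmxA _ E^T E) EtE //.
  rewrite /T0 /psi /S /S' /sv /Phi.
  have h1 := M0_blk; have h2 := wvE; have h3 := dv_gt0 k0 m0.
  move: h2; move: (M0 *m (const_mx 1 : 'cV_(p + q))) => c0 h2.
  move: h1 h2 h3; move: wv M0 dv dvo => w A d d' h1 h2 h3.
  apply/matrixP => a b; rewrite !mul_mx_diag !mul_diag_mx !mxE.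
  have [->|nz] := eqVneq (A a b) 0; first by rewrite !(mulr0, mul0r).
  have [e1 e2] := h1 _ _ nz.
  rewrite !h2 -e1 -e2 /phi !mulrA.
  exact: scal.
have hc : char_poly_mx (normLap (Fk_padded n k B)) =
   ('X - 1)%:M + map_mx polyC (E *m S') *m map_mx polyC (S *m (Phi *m M0 *m Phi) *m E^T).
  rewrite /char_poly_mx hM map_mxB map_mx1 map_mxM opprB addrA addrAC.
  by congr (_ + _); rewrite raddfB.
rewrite /char_poly hc WA -map_mxM hGU.
by [].
Qed.

End Main.

Lemma sizeN n p q k : (0 < n)%N -> (q <= p)%N -> (k %| n)%N ->
  (p + ((\sum_(j < k) q)%N + (\sum_(i < (n %/ k).-1) p)%N) + ((n - n %/ k) * p + q - k * q) = n * p + q)%N.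
Proof.
rewrite !sum_nat_const !card_ord => n0 qp /dvdnP [m En]; subst n.
have k0 : (0 < k)%N by move: n0; rewrite muln_gt0 => /andP[].
have m0 : (0 < m)%N by move: n0; rewrite muln_gt0 => /andP[].
rewrite mulnK //.
have h1 : ((k - 1) * q <= (m * k - m) * p)%N.
  have -> : (m * k - m = m * (k - 1))%N by rewrite mulnBr muln1 mulnC.
  by apply: leq_mul => //; exact: leq_pmull.
nia.
Qed.

Unset Implicit Arguments.

Theorem theorem3p6 (R : rcfType) (n p q : nat) (B : 'M[R]_(p, q)) :
  (0 < n)%N -> (0 < q)%N -> (q <= p)%N ->
  (forall i j, 0 <= B i j) ->
  forall k1 k2 : nat, (k1 %| n)%N -> (k2 %| n)%N ->
  cospectral (normLap (Fk_padded n k1 B)) (normLap (Fk_padded n k2 B)).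
Proof.
move=> n0 q0 qp _ k1 k2 h1 h2; rewrite /cospectral.
have pos k : (k %| n)%N -> (0 < k)%N /\ (0 < n %/ k)%N.
  move=> hk; have k0 : (0 < k)%N := dvdn_gt0 n0 hk.
  by split => //; rewrite divn_gt0 // dvdn_leq.
have [k10 m10] := pos _ h1; have [k20 m20] := pos _ h2.
have x0 : ('X - 1 : {poly R}) ^+ (p + q) != 0.
  by rewrite expf_neq0 // -polyC1 polyXsubC_eq0.
apply: (mulfI x0).
rewrite (key B k10 m10) (key B k20 m20) /padN.
by rewrite !sizeN.
Qed.
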